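(* Let $L$ be a combinatorial tiling locally isomorphic to $K$, and let $L_{\mathrm{aff}}^{(1)}$ be the 1-skeleton of $L_{\mathrm{aff}}$. Let $d'$ be the unit-edge metric on $L_{\mathrm{aff}}^{(1)}$ and $d$ the path metric on $L_{\mathrm{aff}}$ restricted to $L_{\mathrm{aff}}^{(1)}$. Then $d'$ and $d$ are equivalent on $L_{\mathrm{aff}}^{(1)}$; more precisely, $d\le d'\le 3d$.
   Context: A combinatorial tiling is a 2-dimensional CW-complex homeomorphic to the plane. The combinatorial pentagonal tiling $K$ is built as follows: $K_0$ is a (decorated) combinatorial pentagon, i.e. a space homeomorphic to the closed disk with five distinguished boundary points; the pentagonal subdivision rule $\omega$ replaces each pentagon $t$ by a supertile $\omega(t)$ consisting of six pentagons (a central pentagon surrounded by a ring of five, combinatorially half a dodecahedron), each edge of $t$ being split into two edges, with decorations of the subtiles prescribed by the rule (finitely many decorated prototiles); $K_n:=\omega^n(K_0)$, embeddings $\iota_n:K_n\to K_{n+1}$ send the central pentagon to the central pentagon, and $K:=\varinjlim K_n$. A combinatorial tiling $L$ is locally isomorphic to $K$ if every finite patch (finite subcomplex) of $L$ is isomorphic, via a cell-preserving decoration-preserving isomorphism, to a patch of $K$. For such $L$, $L_{\mathrm{aff}}$ is the space $L$ with the metric obtained by making each edge isometric to $[0,1]$ and each face isometric to a Euclidean regular pentagon of side length $1$; the distance $d$ between two points is the length of a shortest path between them. The unit-edge metric $d'$ on the 1-skeleton is the length of a shortest path within the 1-skeleton (edge-path), each edge having length $1$. *)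

(* Defs.v *)
From mathcomp Require Import ssreflect ssrfun ssrbool eqtype ssrnat div seq fintype.
From Stdlib Require Import Reals Relations.
From Coquelicot Require Import Rbar Lub.

Set Implicit Arguments.
Unset Strict Implicit.
Unset Printing Implicit Defensive.

Local Open Scope R_scope.

Definition pt2 := (R * R)%type.

Definition edist (x y : pt2) : R :=
  sqrt ((fst x - fst y) ^ 2 + (snd x - snd y) ^ 2).

(* circumradius of the regular pentagon with side 1 *)
Definition circumR : R := / (2 * sin (PI / 5)).

(* vertex i (indices read mod 5 automatically by periodicity) *)
Definition pvert (i : nat) : pt2 :=
  (circumR * cos (2 * PI * INR i / 5), circumR * sin (2 * PI * INR i / 5)).

Definition comb (t : R) (x y : pt2) : pt2 :=
  ((1 - t) * fst x + t * fst y, (1 - t) * snd x + t * snd y).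

Definition in_pent (x : pt2) : Prop :=
  exists a : nat -> R, (forall k, 0 <= a k) /\
    a 0%nat + a 1%nat + a 2%nat + a 3%nat + a 4%nat = 1 /\
    x = (a 0%nat * fst (pvert 0) + a 1%nat * fst (pvert 1) + a 2%nat * fst (pvert 2)
         + a 3%nat * fst (pvert 3) + a 4%nat * fst (pvert 4),
         a 0%nat * snd (pvert 0) + a 1%nat * snd (pvert 1) + a 2%nat * snd (pvert 2)
         + a 3%nat * snd (pvert 3) + a 4%nat * snd (pvert 4)).

Definition side_pt (i : 'I_5) (t : R) : pt2 := comb t (pvert i) (pvert (i.+1)).

(* symmetries of the pentagon: rotation by 2*pi*k/5, after an optional
   reflection in the x-axis *)
Definition psym := ('I_5 * bool)%type.

Definition sym_act (s : psym) (x : pt2) : pt2 :=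
  let y := if s.2 then (fst x, - snd x) else x in
  let th := 2 * PI * INR s.1 / 5 in
  (cos th * fst y - sin th * snd y, sin th * fst y + cos th * snd y).

(* glue f i = (g, j) : side i of face f is glued to side j of face g, *)
(* the parameter t on the former matching 1 - t on the latter.         *)

Record PentComplex (D : Type) := {
  face : Type;
  glue : face -> 'I_5 -> face * 'I_5;
  label : face -> D
}.
Arguments face {D} p.
Arguments glue {D} p _ _.
Arguments label {D} p _.

Section Complex.
Variables (D : Type) (L : PentComplex D).

Definition cpt := (face L * pt2)%type.

Definition glue_rel (p q : cpt) : Prop :=
  exists (i : 'I_5) (t : R), 0 <= t <= 1 /\ snd p = side_pt i t /\
    snd q = side_pt (glue L (fst p) i).2 (1 - t) /\ fst q = (glue L (fst p) i).1.

Definition eqv : cpt -> cpt -> Prop := clos_refl_sym_trans cpt glue_rel.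

Definition valid (p : cpt) : Prop := in_pent (snd p).

Definition on_skel (p : cpt) : Prop :=
  exists (i : 'I_5) (t : R), 0 <= t <= 1 /\ snd p = side_pt i t.

(* a step (f, x, y) is a straight segment from x to y inside face f *)
Definition step := (face L * pt2 * pt2)%type.

Fixpoint chain_ok (seg_ok : pt2 -> pt2 -> Prop) (p q : cpt) (s : seq step)
  : Prop :=
  match s with
  | [::] => eqv p q
  | (f, x, y) :: s' =>
      seg_ok x y /\ eqv p (f, x) /\ chain_ok seg_ok (f, y) q s'
  end.

Fixpoint chain_len (s : seq step) : R :=
  match s with
  | [::] => 0
  | (_, x, y) :: s' => edist x y + chain_len s'
  end.

Definition face_seg (x y : pt2) : Prop := in_pent x /\ in_pent y.

Definition edge_seg (x y : pt2) : Prop :=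
  exists (i : 'I_5) (s t : R), 0 <= s <= 1 /\ 0 <= t <= 1 /\
    x = side_pt i s /\ y = side_pt i t.

(* d : path metric of L_aff (infimum of lengths of piecewise straight paths) *)
Definition dist_aff (p q : cpt) : Rbar :=
  Glb_Rbar (fun l => exists s, chain_ok face_seg p q s /\ l = chain_len s).

(* d' : unit-edge path metric of the 1-skeleton *)
Definition dist_skel (p q : cpt) : Rbar :=
  Glb_Rbar (fun l => exists s, chain_ok edge_seg p q s /\ l = chain_len s).

(* L is a combinatorial tiling: every edge lies in exactly two face-sides,
   and the space L_aff is homeomorphic to the plane. *)
Definition is_tiling : Prop :=
  (forall f i, glue L (glue L f i).1 (glue L f i).2 = (f, i)) /\
  (forall f i, glue L f i <> (f, i)) /\
  exists h : cpt -> pt2,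
    (forall p q, valid p -> valid q -> (h p = h q <-> eqv p q)) /\
    (forall z, exists p, valid p /\ h p = z) /\
    (forall p eps, valid p -> 0 < eps -> exists del, 0 < del /\
       forall q, valid q -> Rbar_lt (dist_aff p q) (Finite del) ->
         edist (h p) (h q) < eps) /\
    (forall p eps, valid p -> 0 < eps -> exists del, 0 < del /\
       forall q, valid q -> edist (h p) (h q) < del ->
         Rbar_lt (dist_aff p q) (Finite eps)).

End Complex.

(* every finite patch of L is isomorphic (cell- and decoration-preserving)
   to a patch of M *)
Definition locally_iso (D : Type) (L M : PentComplex D) : Prop :=
  forall S : seq (face L),
    exists (phi : face L -> face M) (rho : face L -> psym),
      (forall f g, List.In f S -> List.In g S -> phi f = phi g -> f = g) /\
      (forall f, List.In f S -> label M (phi f) = label L f) /\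
      (forall f g x y, List.In f S -> List.In g S -> in_pent x -> in_pent y ->
         (@eqv _ L (f, x) (g, y) <->
          @eqv _ M (phi f, sym_act (rho f) x) (phi g, sym_act (rho g) y))).

(* Subtiles of a pentagon t: 0 = central pentagon, k.+1 = ring pentagon *)
(* r_k at corner k of t. With corners C_k, midpoints M_k of side k of  *)
(* t and central vertices Z_k (all counterclockwise), r_k has vertices *)
(* C_k, M_k, Z_k, Z_(k-1), M_(k-1) and the central tile Z_0..Z_4.      *)
(* A face of K_n is a word of length n listing subtile indices from the *)
(* finest level (head) to the coarsest (last).                         *)

Local Open Scope nat_scope.

Definition o5 (n : nat) : 'I_5 := inord (modn n 5).
Definition ringt (k : nat) : 'I_6 := inord (modn k 5).+1.

(* inside the supertile: inl = glued to another subtile;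
   inr (k, true/false) = first/second half of side k of the parent *)
Definition inner (a : 'I_6) (i : 'I_5) : ('I_6 * 'I_5) + ('I_5 * bool) :=
  if (a : nat) == 0%N then inl (ringt (i + 1)%N, o5 2)
  else let k := (a : nat).-1 in
  match (i : nat) with
  | 0 => inr (o5 k, true)
  | 1 => inl (ringt (k + 1)%N, o5 3)
  | 2 => inl (ord0, o5 (k + 4)%N)
  | 3 => inl (ringt (k + 4)%N, o5 1)
  | _ => inr (o5 (k + 4)%N, false)
  end.

(* the subtile side across a half of a parent side glued to parent side j *)
Definition outer (j : 'I_5) (first : bool) : 'I_6 * 'I_5 :=
  if first then (ringt (j + 1)%N, o5 4) else (ringt j, o5 0).

Fixpoint nbr (w : seq 'I_6) (i : 'I_5) : option (seq 'I_6 * 'I_5) :=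
  match w with
  | [::] => None
  | a :: u =>
      match inner a i with
      | inl (b, j) => Some (b :: u, j)
      | inr (k, fh) =>
          match nbr u k with
          | Some (u', j') => Some ((outer j' fh).1 :: u', (outer j' fh).2)
          | None => None
          end
      end
  end.

(* direct limit: K_n embeds in K_(n+1) by w |-> rcons w 0 (central to
   central); faces of K are words with no trailing central letter *)
Fixpoint dropz (s : seq 'I_6) : seq 'I_6 :=
  match s with
  | [::] => [::]
  | a :: s' => if a == ord0 then dropz s' else s
  end.

Definition canon (w : seq 'I_6) : seq 'I_6 := rev (dropz (rev w)).

Lemma dropz_idem s : dropz (dropz s) = dropz s.
Proof.
elim: s => //= a s IH; case: eqP => [_ | /eqP Ha] //=.
by rewrite (negbTE Ha).
Qed.

Lemma canon_idem w : canon (canon w) == canon w.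
Proof. by rewrite /canon revK dropz_idem. Qed.

Definition Kface := {w : seq 'I_6 | canon w == w}.

Definition mkK (w : seq 'I_6) : Kface := exist _ (canon w) (canon_idem w).

Definition glueK (w : Kface) (i : 'I_5) : Kface * 'I_5 :=
  match nbr (rcons (proj1_sig w) ord0) i with
  | Some (w', j) => (mkK w', j)
  | None => (w, i)
  end.

(* decorations: K_0 carries d0; subtile a of a tile decorated d carries
   sub d a *)
Definition labelK (D : Type) (sub : D -> 'I_6 -> D) (d0 : D) (w : Kface) : D :=
  foldr (fun a d => sub d a) d0 (proj1_sig w).

Definition Kcomplex (D : Type) (sub : D -> 'I_6 -> D) (d0 : D) : PentComplex D :=
  {| face := Kface; glue := glueK; label := labelK sub d0 |}.

(* Main.v *)
Require Import Defs.
From mathcomp Require Import ssreflect ssrfun ssrbool eqtype ssrnat seq fintype.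
From Stdlib Require Import Reals.
From Coquelicot Require Import Rbar Lub.
From mathcomp Require Import div.
From Stdlib Require Import Rgeom Relations Lra Psatz Classical.

Module Aux.
Local Open Scope R_scope.

Lemma le_sqrt w Z : 0 <= w -> w ^ 2 <= Z -> w <= sqrt Z.
Proof. move=> H1 H2; rewrite -(sqrt_pow2 w H1); exact: sqrt_le_1_alt. Qed.

Lemma edist_sym x y : edist x y = edist y x.
Proof. rewrite /edist; f_equal; ring. Qed.

Lemma edist_ge0 x y : 0 <= edist x y.
Proof. exact: sqrt_pos. Qed.

Lemma edist_tri x y z : edist x z <= edist x y + edist y z.
Proof.
have := triangle (fst x) (snd x) (fst z) (snd z) (fst y) (snd y).
by rewrite /dist_euc /edist !Rsqr_pow2.
Qed.

Lemma G_same x0 y0 x1 y1 s t :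
  (x1-x0)^2+(y1-y0)^2 = 1 ->
  edist (comb s (x0,y0) (x1,y1)) (comb t (x0,y0) (x1,y1)) = Rabs (s - t).
Proof.
move=> H; rewrite /edist /comb /=.
rewrite -sqrt_Rsqr_abs Rsqr_pow2; f_equal.
transitivity ((s-t)^2 * ((x1-x0)^2+(y1-y0)^2)); first ring.
rewrite H; ring.
Qed.

Lemma G_adj x0 y0 x1 y1 x2 y2 s t :
  (x1-x0)^2+(y1-y0)^2 = 1 -> (x2-x1)^2+(y2-y1)^2 = 1 ->
  0 <= (x1-x0)*(x2-x1)+(y1-y0)*(y2-y1) -> 0<=s<=1 -> 0<=t<=1 ->
  (1-s)+t <= 3 * edist (comb s (x0,y0) (x1,y1)) (comb t (x1,y1) (x2,y2)).
Proof.
move=> H0 H1 Hd Hs Ht; rewrite /edist /comb /=.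
set d := (x1-x0)*(x2-x1)+(y1-y0)*(y2-y1) in Hd.
have E : ((1 - s) * x0 + s * x1 - ((1 - t) * x1 + t * x2)) ^ 2 +
    ((1 - s) * y0 + s * y1 - ((1 - t) * y1 + t * y2)) ^ 2 =
    (1-s)^2 * ((x1-x0)^2+(y1-y0)^2) + t^2 * ((x2-x1)^2+(y2-y1)^2) + 2*(1-s)*t*d.
  rewrite /d; ring.
rewrite E H0 H1.
have : ((1-s)+t)/3 <= sqrt ((1 - s) ^ 2 * 1 + t ^ 2 * 1 + 2 * (1 - s) * t * d).
  apply: le_sqrt; first lra.
  have h1 : 0 <= (1-s)*t*d by apply: Rmult_le_pos; [apply: Rmult_le_pos|]; lra.
  have h2 : 0 <= (1-s)^2 by apply: pow2_ge_0.
  have h3 : 0 <= t^2 by apply: pow2_ge_0.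
  have h4 : 0 <= (1-s-t)^2 by apply: pow2_ge_0.
  have -> : ((1 - s + t) / 3) ^ 2 = (2*(1-s)^2+2*t^2 - (1-s-t)^2)/9 by field.
  lra.
lra.
Qed.

Lemma G_two x0 y0 x1 y1 x2 y2 x3 y3 s t :
  (x2-x1)^2+(y2-y1)^2 = 1 ->
  0 <= (x1-x0)*(x2-x1)+(y1-y0)*(y2-y1) ->
  0 <= (x2-x1)*(x3-x2)+(y2-y1)*(y3-y2) -> 0<=s<=1 -> 0<=t<=1 ->
  (1-s)+1+t <= 3 * edist (comb s (x0,y0) (x1,y1)) (comb t (x2,y2) (x3,y3)).
Proof.
move=> H1 Hd1 Hd2 Hs Ht; rewrite /edist /comb /=.
set vx := ((1 - s) * x0 + s * x1 - ((1 - t) * x2 + t * x3)).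
set vy := ((1 - s) * y0 + s * y1 - ((1 - t) * y2 + t * y3)).
set w := - (vx * (x2-x1) + vy * (y2-y1)).
have Ew : w = (1-s)*((x1-x0)*(x2-x1)+(y1-y0)*(y2-y1)) + ((x2-x1)^2+(y2-y1)^2)
   + t * ((x2-x1)*(x3-x2)+(y2-y1)*(y3-y2)).
  rewrite /w /vx /vy; ring.
rewrite H1 in Ew.
have Hw : 1 <= w.
  have : 0 <= (1-s)*((x1-x0)*(x2-x1)+(y1-y0)*(y2-y1)) by apply: Rmult_le_pos; lra.
  have : 0 <= t*((x2-x1)*(x3-x2)+(y2-y1)*(y3-y2)) by apply: Rmult_le_pos; lra.
  lra.
have : w <= sqrt (vx^2 + vy^2).
  apply: le_sqrt; first lra.
  have C : (vx^2+vy^2)*((x2-x1)^2+(y2-y1)^2) - w^2 = (vx*(y2-y1) - vy*(x2-x1))^2.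
    rewrite /w; ring.
  rewrite H1 in C.
  have : 0 <= (vx*(y2-y1) - vy*(x2-x1))^2 by apply: pow2_ge_0.
  lra.
move=> hh; have -> : vx * (vx * 1) + vy * (vy * 1) = vx^2+vy^2 by ring. lra.
Qed.

Definition th := 2*PI/5.

Lemma pvert_eq k : pvert k = (circumR * cos (th * INR k), circumR * sin (th * INR k)).
Proof. rewrite /pvert /th; have -> : 2 * PI * INR k / 5 = 2 * PI / 5 * INR k by field. by []. Qed.

Lemma pvert_mod k : pvert k = pvert (k %% 5).
Proof.
rewrite !pvert_eq.
have E : th * INR k = th * INR (k %% 5) + 2 * INR (k %/ 5) * PI.
  rewrite {1}(divn_eq k 5) plus_INR mult_INR /th /=; field.
by rewrite E cos_period sin_period.
Qed.

Lemma trig_sq (r a b : R) :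
  (r * cos b - r * cos a)^2 + (r * sin b - r * sin a)^2 = r^2 * (2 - 2 * cos (a - b)).
Proof.
rewrite cos_minus; have h1 := sin2_cos2 a; have h2 := sin2_cos2 b.
rewrite /Rsqr in h1 h2.
transitivity (r^2 * ((sin a * sin a + cos a * cos a) + (sin b * sin b + cos b * cos b)
   - 2 * (cos a * cos b + sin a * sin b))); first ring.
rewrite h1 h2; ring.
Qed.

Lemma trig_dot (r a b c : R) :
  (r * cos b - r * cos a) * (r * cos c - r * cos b)
  + (r * sin b - r * sin a) * (r * sin c - r * sin b)
  = r^2 * (cos (b - c) - 1 - cos (a - c) + cos (a - b)).
Proof.
rewrite !cos_minus; have h2 := sin2_cos2 b.
rewrite /Rsqr in h2.
transitivity (r^2 * ((cos b * cos c + sin b * sin c) - (sin b * sin b + cos b * cos b)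
   - (cos a * cos c + sin a * sin c) + (cos a * cos b + sin a * sin b))); first ring.
rewrite h2; ring.
Qed.

Lemma sin5_pos : 0 < sin (PI/5).
Proof. apply: sin_gt_0; have := PI_RGT_0; lra. Qed.

Lemma U k : (fst (pvert k.+1) - fst (pvert k))^2 + (snd (pvert k.+1) - snd (pvert k))^2 = 1.
Proof.
rewrite !pvert_eq /= trig_sq.
have -> : th * INR k - th * INR k.+1 = - (2 * (PI/5)).
  rewrite S_INR /th; field.
rewrite cos_neg cos_2a_sin /circumR.
have := sin5_pos; move=> h.
field; lra.
Qed.

Lemma cth : 0 <= cos th <= 1.
Proof.
split; last by have := COS_bound th; lra.
apply: cos_ge_0; rewrite /th; have := PI_RGT_0; lra.
Qed.

Lemma D k : 0 <= (fst (pvert k.+1) - fst (pvert k)) * (fst (pvert k.+2) - fst (pvert k.+1))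
  + (snd (pvert k.+1) - snd (pvert k)) * (snd (pvert k.+2) - snd (pvert k.+1)).
Proof.
rewrite !pvert_eq /= trig_dot.
have -> : th * INR k.+1 - th * INR k.+2 = - th by rewrite !S_INR; ring.
have -> : th * INR k - th * INR k.+2 = - (2 * th) by rewrite !S_INR; ring.
have -> : th * INR k - th * INR k.+1 = - th by rewrite !S_INR; ring.
rewrite !cos_neg cos_2a_cos.
have := cth => h.
apply: Rmult_le_pos; first exact: pow2_ge_0.
nra.
Qed.

Definition Sk (k : nat) (t : R) : pt2 := comb t (pvert k) (pvert k.+1).

Lemma pvert_add5 k : pvert (k + 5) = pvert k.
Proof. by rewrite (pvert_mod (k+5)) modnDr -pvert_mod. Qed.

Lemma Sk5 k t : Sk (k + 5) t = Sk k t.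
Proof. by rewrite /Sk pvert_add5 -addSn pvert_add5. Qed.

Lemma Sk_mod k t : Sk k t = Sk (k %% 5) t.
Proof.
rewrite /Sk (pvert_mod k) (pvert_mod k.+1) (pvert_mod (k %% 5).+1).
by rewrite -(addn1 k) -(addn1 (k %% 5)) modnDml.
Qed.

Lemma side_Sk (i : 'I_5) t : side_pt i t = Sk i t.
Proof. by []. Qed.

Lemma edgeS k s t : 0 <= s <= 1 -> 0 <= t <= 1 -> edge_seg (Sk k s) (Sk k t).
Proof.
move=> Hs Ht; exists (o5 k), s, t; do 2 split => //.
have E : (nat_of_ord (o5 k)) = (k %% 5)%N by rewrite /o5 inordK // ltn_pmod.
by rewrite !side_Sk E -!Sk_mod.
Qed.

Lemma vert k : Sk k 1 = Sk k.+1 0.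
Proof. rewrite /Sk /comb; f_equal; ring. Qed.

Lemma len_S k s t : edist (Sk k s) (Sk k t) = Rabs (s - t).
Proof.
move: (U k); rewrite /Sk; case: (pvert k) => x0 y0; case: (pvert k.+1) => x1 y1 /= H.
exact: G_same.
Qed.

Lemma adjB k s t : 0<=s<=1 -> 0<=t<=1 -> (1-s)+t <= 3 * edist (Sk k s) (Sk k.+1 t).
Proof.
move=> Hs Ht.
have := G_adj (fst (pvert k)) (snd (pvert k)) (fst (pvert k.+1)) (snd (pvert k.+1))
  (fst (pvert k.+2)) (snd (pvert k.+2)) s t (U k) (U k.+1) (D k) Hs Ht.
by rewrite -!surjective_pairing.
Qed.

Lemma twoB k s t : 0<=s<=1 -> 0<=t<=1 -> (1-s)+1+t <= 3 * edist (Sk k s) (Sk k.+2 t).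
Proof.
move=> Hs Ht.
have := G_two (fst (pvert k)) (snd (pvert k)) (fst (pvert k.+1)) (snd (pvert k.+1))
  (fst (pvert k.+2)) (snd (pvert k.+2)) (fst (pvert k.+3)) (snd (pvert k.+3))
  s t (U k.+1) (D k) (D k.+1) Hs Ht.
by rewrite -!surjective_pairing.
Qed.

Section Ch.
Variables (DD : Type) (L : PentComplex DD) (f : face L).

Definition goodch (x y : pt2) :=
  exists sc, chain_ok edge_seg ((f, x) : cpt L) (f, y) sc /\ chain_len sc <= 3 * edist x y.

Lemma refl' (a : cpt L) : eqv a a.
Proof. exact: rst_refl. Qed.

Lemma C0 k s t : 0<=s<=1 -> 0<=t<=1 -> goodch (Sk k s) (Sk k t).
Proof.
move=> Hs Ht; exists [:: (f, Sk k s, Sk k t)]; split.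
  split; first exact: edgeS. by split; apply: refl'.
rewrite /=; have := edist_ge0 (Sk k s) (Sk k t); lra.
Qed.

Lemma C1 k s t : 0<=s<=1 -> 0<=t<=1 -> goodch (Sk k s) (Sk k.+1 t).
Proof.
move=> Hs Ht; exists [:: (f, Sk k s, Sk k 1); (f, Sk k.+1 0, Sk k.+1 t)]; split.
  split; first by apply: edgeS; lra.
  split; first exact: refl'.
  split; first by apply: edgeS; lra.
  by rewrite vert; split; apply: refl'.
rewrite /= !len_S.
have := adjB k s t Hs Ht.
rewrite Rabs_left1; last lra. rewrite Rabs_left1; last lra. lra.
Qed.

Lemma Cm1 k s t : 0<=s<=1 -> 0<=t<=1 -> goodch (Sk k.+1 s) (Sk k t).
Proof.
move=> Hs Ht; exists [:: (f, Sk k.+1 s, Sk k.+1 0); (f, Sk k 1, Sk k t)]; split.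
  split; first by apply: edgeS; lra.
  split; first exact: refl'.
  split; first by apply: edgeS; lra.
  by rewrite vert; split; apply: refl'.
rewrite /= !len_S edist_sym.
have := adjB k t s Ht Hs.
rewrite Rabs_right; last lra. rewrite Rabs_right; last lra. lra.
Qed.

Lemma C2 k s t : 0<=s<=1 -> 0<=t<=1 -> goodch (Sk k s) (Sk k.+2 t).
Proof.
move=> Hs Ht; exists [:: (f, Sk k s, Sk k 1); (f, Sk k.+1 0, Sk k.+1 1);
  (f, Sk k.+2 0, Sk k.+2 t)]; split.
  split; first by apply: edgeS; lra.
  split; first exact: refl'.
  split; first by apply: edgeS; lra.
  split; first by rewrite vert; apply: refl'.
  split; first by apply: edgeS; lra.
  by rewrite vert; split; apply: refl'.
rewrite /= !len_S.
have := twoB k s t Hs Ht.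
rewrite Rabs_left1; last lra. rewrite Rabs_left1; last lra.
rewrite Rabs_left1; last lra. lra.
Qed.

Lemma Cm2 k s t : 0<=s<=1 -> 0<=t<=1 -> goodch (Sk k.+2 s) (Sk k t).
Proof.
move=> Hs Ht; exists [:: (f, Sk k.+2 s, Sk k.+2 0); (f, Sk k.+1 1, Sk k.+1 0);
  (f, Sk k 1, Sk k t)]; split.
  split; first by apply: edgeS; lra.
  split; first exact: refl'.
  split; first by apply: edgeS; lra.
  split; first by rewrite vert; apply: refl'.
  split; first by apply: edgeS; lra.
  by rewrite vert; split; apply: refl'.
rewrite /= !len_S edist_sym.
have := twoB k t s Ht Hs.
rewrite Rabs_right; last lra. rewrite Rabs_right; last lra.
rewrite Rabs_right; last lra. lra.
Qed.

Lemma onface (i j : 'I_5) s t : 0<=s<=1 -> 0<=t<=1 ->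
  goodch (side_pt i s) (side_pt j t).
Proof.
move=> Hs Ht; rewrite !side_Sk.
have Hj : Sk j t = Sk (i + (j + 5 - i) %% 5) t.
  rewrite (Sk_mod (i + _)) modnDmr subnKC; last by rewrite ltnW // ltn_addl.
  by rewrite modnDr -Sk_mod.
rewrite Hj; have : leq (S (modn (subn (addn j 5) i) 5)) 5 by rewrite ltn_pmod.
move: (modn (subn (addn j 5) i) 5) => d.
case: d => [|[|[|[|[|d]]]]] // _.
- by rewrite addn0; apply: C0.
- by rewrite addn1; apply: C1.
- by rewrite addn2; apply: C2.
- by rewrite -(Sk5 i) (_ : addn i 5 = (addn i 3).+2) ?(addnS, addn1, addn0) //; apply: Cm2.
- by rewrite -(Sk5 i) (_ : addn i 5 = (addn i 4).+1) ?(addnS, addn1, addn0) //; apply: Cm1.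
Qed.
End Ch.

Set Implicit Arguments.

Lemma in_pent_side (i : 'I_5) t : 0 <= t <= 1 -> in_pent (side_pt i t).
Proof.
move=> Ht.
have P5 : pvert 5 = pvert 0 := pvert_add5 0.
rewrite /side_pt.
case: i => [[|[|[|[|[|?]]]]] Hi] //.
- exists (fun n => if n == 0%nat then 1-t else if n == 1%nat then t else 0).
  split; first by move=> [|[|?]] /=; lra.
  split; first by simpl; ring.
  rewrite /comb /=; f_equal; ring.
- exists (fun n => if n == 1%nat then 1-t else if n == 2%nat then t else 0).
  split; first by move=> [|[|[|?]]] /=; lra.
  split; first by simpl; ring.
  rewrite /comb /=; f_equal; ring.
- exists (fun n => if n == 2%nat then 1-t else if n == 3%nat then t else 0).
  split; first by move=> [|[|[|[|?]]]] /=; lra.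
  split; first by simpl; ring.
  rewrite /comb /=; f_equal; ring.
- exists (fun n => if n == 3%nat then 1-t else if n == 4%nat then t else 0).
  split; first by move=> [|[|[|[|[|?]]]]] /=; lra.
  split; first by simpl; ring.
  rewrite /comb /=; f_equal; ring.
- exists (fun n => if n == 4%nat then 1-t else if n == 0%nat then t else 0).
  split; first by move=> [|[|[|[|[|?]]]]] /=; lra.
  split; first by simpl; ring.
  rewrite (_ : pvert (nat_of_ord (Ordinal Hi)).+1 = pvert 0); last exact: P5.
  rewrite /comb /=; f_equal; ring.
Qed.

Section Main.
Variables (DD : Type) (L : PentComplex DD).

Lemma glue_skel (p q : cpt L) : glue_rel p q -> on_skel p /\ on_skel q.
Proof.
move=> [i [t [Ht [Hp [Hq _]]]]]; split.
  by exists i, t.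
exists (glue L p.1 i).2, (1 - t); split => //; lra.
Qed.

Lemma eqv_skel (p q : cpt L) : eqv p q -> (on_skel p <-> on_skel q).
Proof.
elim=> [x y /glue_skel [? ?]|x|x y _ IH|x y z _ IH1 _ IH2]; tauto.
Qed.

Lemma eqv_int (p q : cpt L) : eqv p q -> ~ on_skel p -> p = q.
Proof.
elim=> [x y /glue_skel [? ?]|x|x y E IH|x y z E1 IH1 E2 IH2]; try tauto.
- move=> H; symmetry; apply: IH; move=> H'; apply: H; exact: (proj1 (eqv_skel E) H').
- move=> H; have e := IH1 H; subst y; exact: IH2.
Qed.

Lemma chain_eqv_l P (a a' b : cpt L) s : chain_ok P a b s -> eqv a' a -> chain_ok P a' b s.
Proof.
case: s => [|[[g x] y] s] /=.
  by move=> H1 H2; apply: rst_trans H2 H1.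
by move=> [H1 [H2 H3]] H4; split => //; split => //; apply: rst_trans H4 H2.
Qed.

Lemma chain_cat P (a b c : cpt L) s1 s2 :
  chain_ok P a b s1 -> chain_ok P b c s2 -> chain_ok P a c (s1 ++ s2).
Proof.
elim: s1 a => [|[[g x] y] s1 IH] a /=.
  by move=> H1 H2; apply: chain_eqv_l H2 H1.
by move=> [H1 [H2 H3]] H4; split => //; split => //; apply: IH H3 H4.
Qed.

Lemma chain_len_cat (s1 s2 : seq (step L)) : chain_len (s1 ++ s2) = chain_len s1 + chain_len s2.
Proof. elim: s1 => [|[[g x] y] s1 IH] /=; [ring | rewrite IH; ring]. Qed.

Lemma chain_len_ge0 (s : seq (step L)) : 0 <= chain_len s.
Proof. elim: s => [|[[g x] y] s1 IH] /=; [lra | have := edist_ge0 x y; lra]. Qed.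

Lemma chain_mono (P Q : pt2 -> pt2 -> Prop) (a b : cpt L) s :
  (forall x y, P x y -> Q x y) -> chain_ok P a b s -> chain_ok Q a b s.
Proof.
move=> PQ; elim: s a => [|[[g x] y] s1 IH] a //=.
by move=> [H1 [H2 H3]]; split; [exact: PQ | split => //; exact: IH].
Qed.

Lemma transform n : forall (s : seq (step L)) (p q : cpt L), (size s <= n)%nat ->
  on_skel p -> on_skel q -> chain_ok face_seg p q s ->
  exists s', chain_ok edge_seg p q s' /\ chain_len s' <= 3 * chain_len s.
Proof.
elim: n => [|n IH] [|[[g x] y] s] p q //= Hn Hp Hq Hc.
- by exists [::]; split => //=; lra.
- by exists [::]; split => //=; lra.
- move: Hc => [Hxy [Hpx Hc]].
  have Hx : on_skel ((g, x) : cpt L) := proj1 (eqv_skel Hpx) Hp.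
  case: (classic (on_skel ((g, y) : cpt L))) => Hy.
  + have [s2 [Hs2 Hl2]] := IH s (g, y) q (ltnSE Hn) Hy Hq Hc.
    move: Hx Hy => [i [a [Ha Ex]]] [j [b [Hb Ey]]].
    simpl in Ex, Ey; subst x y.
    have [sc [Hsc Hl]] := @onface _ _ g i j a b Ha Hb.
    exists (sc ++ s2); split.
      apply: chain_cat; last exact: Hs2.
      by apply: chain_eqv_l Hpx.
    rewrite chain_len_cat /=; lra.
  + case: s Hn Hc => [|[[g' x'] y'] s] /= Hn Hc.
      by have E := eqv_int Hc Hy; subst q.
    move: Hc => [Hxy' [Hyx' Hc]].
    have E := eqv_int Hyx' Hy; case: E => Eg Ex; subst g' x'.
    have Hn' : (size ((g, x, y') :: s) <= n)%nat by [].
    have Hc' : chain_ok face_seg p q ((g, x, y') :: s).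
      split; first by split; [exact: Hxy.1 | exact: Hxy'.2].
      by split.
    have [s' [Hs' Hl']] := IH _ p q Hn' Hp Hq Hc'.
    exists s'; split => //.
    simpl in Hl'; have := edist_tri x y y'; lra.
Qed.

End Main.

Lemma mult3_pinf : Rbar_mult (Finite 3) p_infty = p_infty.
Proof.
rewrite /Rbar_mult /Rbar_mult'.
case: Rle_dec => [H|H]; last lra.
by case: Rle_lt_or_eq_dec => // H'; lra.
Qed.


End Aux.
Import Aux.

Theorem theorem2p2 (D : finType) (sub : D -> 'I_6 -> D) (d0 : D)
  (Hd0 : sub d0 ord0 = d0)
  (L : PentComplex D) (HL : is_tiling L)
  (Hloc : locally_iso L (Kcomplex sub d0)) :
  forall p q : cpt L,
    valid p -> valid q -> on_skel p -> on_skel q ->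
    Rbar_le (dist_aff p q) (dist_skel p q) /\
    Rbar_le (dist_skel p q) (Rbar_mult (Finite 3) (dist_aff p q)).
Proof.
Local Open Scope R_scope.
move=> p q _ _ Hp Hq.
rewrite /dist_aff /dist_skel.
set A := (fun l => exists s, chain_ok face_seg p q s /\ l = chain_len s).
set B := (fun l => exists s, chain_ok edge_seg p q s /\ l = chain_len s).
have [lbA glbA] := Glb_Rbar_correct A.
have [lbB glbB] := Glb_Rbar_correct B.
have key : forall l, A l -> exists l', B l' /\ l' <= 3 * l.
  move=> l [s [Hs ->]].
  have [s' [Hs' Hl]] := @transform _ _ (size s) s p q (leqnn _) Hp Hq Hs.
  by exists (chain_len s'); split => //; exists s'.
split.
  apply: glbB => l [s [Hs ->]]; apply: lbA; exists s; split => //.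
  apply: chain_mono Hs => x y [i [s1 [t1 [H1 [H2 [-> ->]]]]]].
  by split; apply: in_pent_side.
case EB: (Glb_Rbar B) => [b| |] //.
- have lb : is_lb_Rbar A (Finite (b / 3)).
    move=> l Al; have [l' [Bl' Hl']] := key l Al.
    have := lbB l' Bl'; rewrite EB /= => h; lra.
  have := glbA _ lb.
  case: (Glb_Rbar A) => [g| |] h.
  + simpl in h |- *; lra.
  + by rewrite mult3_pinf.
  + by [].
- case: (classic (exists l, A l)) => [[l Al]|NA].
    have [l' [Bl' _]] := key l Al.
    by have := lbB l' Bl'; rewrite EB.
  have lb : is_lb_Rbar A p_infty by move=> l Al; case: NA; exists l.
  have := glbA _ lb.
  case: (Glb_Rbar A) => [g| |] h; try by [].
  by rewrite mult3_pinf.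
Qed.
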